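(* Let $v\in\mathbb{Z}^d$ be primitive and $p$ a prime. Let $h\in H_v(\mathbb{Q}_p)\cap\mathrm{SO}_d(\mathbb{Z}_p)\mathrm{SO}_d(\mathbb{Z}[1/p])$, and write $h=c_1\gamma_1$ with $c_1\in\mathrm{SO}_d(\mathbb{Z}_p)$, $\gamma_1\in\mathrm{SO}_d(\mathbb{Z}[1/p])$, and $g_v^{-1}hg_v=c_2\gamma_2^{-1}$ with $c_2\in\mathrm{ASL}_{d-1}(\mathbb{Z}_p)$, $\gamma_2\in\mathrm{ASL}_{d-1}(\mathbb{Z}[1/p])$. Let $\Lambda$ be the $\mathbb{Z}$-span of the first $d-1$ columns of $\gamma_1g_v\gamma_2$. Then $\gamma_1v$ is a primitive integer vector, $\Lambda=\Lambda_{\gamma_1v}$, and $\mathrm{cov}(\Lambda)=\mathrm{cov}(\Lambda_v)$.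
   Context: For primitive $u\in\mathbb{Z}^d$, $\Lambda_u=u^\perp\cap\mathbb{Z}^d$. $H_v\le\mathrm{SO}_d$ is the stabilizer of $v$; $g_v\in\mathrm{SL}_d(\mathbb{Z})$ is a matrix whose first $d-1$ columns form a positively oriented $\mathbb{Z}$-basis of $\Lambda_v$. $\mathrm{ASL}_{d-1}=\{\begin{pmatrix}g&*\\0&1\end{pmatrix}:g\in\mathrm{SL}_{d-1}\}$; $g_v^{-1}H_vg_v\le\mathrm{ASL}_{d-1}$. The covolume of a rank-$(d-1)$ discrete subgroup with basis matrix $b\in M_{d\times(d-1)}(\mathbb{R})$ is $\sqrt{\det(b^tb)}$. *)

(* Defs.v *)
From HB Require Import structures.
From mathcomp Require Import all_boot all_order all_algebra all_field.
Set Implicit Arguments. Unset Strict Implicit. Unset Printing Implicit Defensive.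
Import Order.TTheory GRing.Theory Num.Theory.
Local Open Scope ring_scope.

(* libraries.  We therefore quantify over every pair (K, O) of a field K    *)
(* and a subring O satisfying the axioms below; these axioms characterize   *)
(* (Q_p, Z_p) up to unique isomorphism:                                     *)
(* Hence O / p^n O = Z / p^n Z and O = lim Z/p^n = Z_p, K = O[1/p] = Q_p.  *)
Record padic_model (p : nat) (K : fieldType) (O : {pred K}) : Prop := {
  pm_char0 : [pchar K] =i pred0;
  pm_one : 1 \in O;
  pm_sub : forall x y, x \in O -> y \in O -> x - y \in O;
  pm_mul : forall x y, x \in O -> y \in O -> x * y \in O;
  pm_rat : forall r : rat, (ratr r \in O) = ~~ (p %| absz (denq r))%N;
  pm_val : forall x : K, x != 0 ->
     exists (k : int) (u : K), [/\ u \in O, u^-1 \in O & x = p%:R ^ k * u];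
  pm_dense : forall x, x \in O -> forall n : nat,
     exists z : int, (x - z%:~R) / p%:R ^+ n \in O;
  pm_sep : forall x : K, (forall n : nat, x / p%:R ^+ n \in O) -> x = 0;
  pm_complete : forall a : nat -> K, (forall n, a n \in O) ->
     (forall n, (a n.+1 - a n) / p%:R ^+ n \in O) ->
     exists2 x, x \in O & forall n, (x - a n) / p%:R ^+ n \in O
}.

Arguments padic_model p K O : clear implicits.

Definition in_Zinvp (p : nat) (r : rat) : Prop :=
  exists k : nat, (denq r %| (p ^ k)%:Z)%Z.

Definition intmx (R : pzRingType) m n (M : 'M[int]_(m, n)) : 'M[R]_(m, n) :=
  map_mx (fun z : int => z%:~R) M.
Definition ratmx (R : unitRingType) m n (M : 'M[rat]_(m, n)) : 'M[R]_(m, n) :=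
  map_mx (fun r : rat => ratr r) M.
Arguments intmx {R m n} M.
Arguments ratmx {R m n} M.

Definition is_SO (R : comUnitRingType) d (S : R -> Prop) (M : 'M[R]_d) : Prop :=
  [/\ forall i j, S (M i j), M^T *m M = 1%:M & \det M = 1].

(* ASL_{n}(S) = { (g *; 0 1) : g in SL_n(S) } inside 'M_(n+1) *)
Definition is_ASL (R : comUnitRingType) n (S : R -> Prop) (M : 'M[R]_(n + 1)) : Prop :=
  [/\ forall i j, S (M i j), dlsubmx M = 0, drsubmx M = 1%:M & \det (ulsubmx M) = 1].

Definition primitive d (v : 'cV[int]_d) : Prop :=
  (\big[gcdn/0%N]_(i < d) absz (v i ord0))%N = 1%N.

Definition Lambda d (u : 'cV[int]_d) (x : 'cV[rat]_d) : Prop :=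
  exists z : 'cV[int]_d, x = intmx z /\ u^T *m z = 0.

Definition Zspan d k (B : 'M[rat]_(d, k)) (x : 'cV[rat]_d) : Prop :=
  exists c : 'cV[int]_k, x = B *m intmx c.

Definition is_gv n (v : 'cV[int]_(n + 1)) (g : 'M[int]_(n + 1)) : Prop :=
  [/\ \det g = 1,
      forall x, Zspan (intmx (lsubmx g)) x <-> Lambda v x
    & 0 < \det (row_mx (lsubmx g) v)].

Definition in_Hv (K : fieldType) d (v : 'cV[int]_d) (h : 'M[K]_d) : Prop :=
  is_SO (fun _ => True) h /\ h *m intmx v = intmx v.

Definition covol d k (b : 'M[rat]_(d, k)) : algC :=
  sqrtC (\det ((ratmx b)^T *m ratmx b)).

(* Main.v *)
Require Import Defs.
From HB Require Import structures.
From mathcomp Require Import all_boot all_order all_algebra all_field.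
From mathcomp Require Import ring.
Import Order.TTheory GRing.Theory Num.Theory.
Set Implicit Arguments. Unset Strict Implicit. Unset Printing Implicit Defensive.
Local Open Scope ring_scope.
Section Ratr.
Variable K : fieldType.
Hypothesis K0 : [pchar K] =i pred0.

Lemma ratr_den_nz (x : rat) : (denq x)%:~R != 0 :> K.
Proof.
have [d ->] := denqP x.
move/pcharf0P: K0 => H. change ((d.+1)%:R != 0 :> K). by rewrite H.
Qed.

Fact ratrK_zmod : zmod_morphism (@ratr K).
Proof.
have injZtoQ: @injective rat int intr by apply: intr_inj.
have nz_den := ratr_den_nz.
move=> x y.
apply: (canLR (mulfK (nz_den _))); apply: (mulIf (nz_den x)).
rewrite mulrAC mulrBl divfK ?nz_den // mulrAC -!rmorphM.
apply: (mulIf (nz_den y)); rewrite mulrAC mulrBl divfK ?nz_den //.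
rewrite -!(rmorphM, rmorphB); congr _%:~R; apply: injZtoQ.
rewrite !(rmorphM, rmorphB) /= [_ - _]lock /= -lock !numqE.
by rewrite (mulrAC y) -!mulrBl -mulrA mulrAC !mulrA.
Qed.

Fact ratrK_monoid : monoid_morphism (@ratr K).
Proof.
have injZtoQ: @injective rat int intr by apply: intr_inj.
have nz_den := ratr_den_nz.
split=> [|x y]; first by rewrite /ratr divr1.
rewrite /ratr mulrC mulrAC; apply: canLR (mulKf (nz_den _)) _; rewrite !mulrA.
do 2!apply: canRL (mulfK (nz_den _)) _; rewrite -!rmorphM; congr _%:~R.
apply: injZtoQ; rewrite !rmorphM [x * y]lock /= !numqE -lock.
by rewrite -!mulrA mulrA mulrCA -!mulrA (mulrCA y).
Qed.

Definition ratrKm : {rmorphism rat -> K} :=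
  HB.pack (@ratr K) (GRing.isZmodMorphism.Build rat K (@ratr K) ratrK_zmod)
     (GRing.isMonoidMorphism.Build rat K (@ratr K) ratrK_monoid).

Lemma ratrKmE x : ratrKm x = ratr x. Proof. by []. Qed.

Lemma ratmxM m k l (A : 'M[rat]_(m, k)) (B : 'M[rat]_(k, l)) :
  ratmx (A *m B) = ratmx A *m ratmx B :> 'M[K]_(m, l).
Proof. exact: (map_mxM ratrKm). Qed.

Lemma ratmx_int m k (A : 'M[int]_(m, k)) :
  ratmx (intmx A : 'M[rat]_(m,k)) = intmx A :> 'M[K]_(m, k).
Proof. by apply/matrixP=> i j; rewrite !mxE ratr_int. Qed.

Lemma ratmx_det k (A : 'M[rat]_k) : \det (ratmx A : 'M[K]_k) = ratr (\det A).
Proof. exact: (det_map_mx ratrKm). Qed.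

Lemma ratmx_tr m k (A : 'M[rat]_(m, k)) : (ratmx A : 'M[K]_(m,k))^T = ratmx A^T.
Proof. exact: map_trmx. Qed.

Lemma ratmxZ m k (a : rat) (A : 'M[rat]_(m, k)) :
  ratmx (a *: A) = ratr a *: ratmx A :> 'M[K]_(m, k).
Proof. exact: (map_mxZ ratrKm). Qed.

Lemma ratmx1 k : ratmx (1%:M : 'M[rat]_k) = 1%:M :> 'M[K]_k.
Proof. exact: (map_mx1 ratrKm). Qed.
End Ratr.

Lemma intmxM (R : comPzRingType) m k l (A : 'M[int]_(m, k)) (B : 'M[int]_(k, l)) :
  intmx (A *m B) = intmx A *m intmx B :> 'M[R]_(m, l).
Proof. exact: (map_mxM (intr : int -> R)). Qed.

Lemma intmx_det (R : comPzRingType) k (A : 'M[int]_k) : \det (intmx A : 'M[R]_k) = (\det A)%:~R.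
Proof. exact: (det_map_mx (intr : int -> R)). Qed.
Section OLemmas.
Variables (p : nat) (K : fieldType) (O : {pred K}).
Hypothesis PM : padic_model p K O.
Hypothesis pr : prime p.

Lemma O0 : 0 \in O.
Proof. by rewrite -(subrr 1); apply: (pm_sub PM); apply: (pm_one PM). Qed.
Lemma ON x : x \in O -> - x \in O.
Proof. by move=> h; rewrite -sub0r; apply: (pm_sub PM) => //; apply: O0. Qed.
Lemma OD x y : x \in O -> y \in O -> x + y \in O.
Proof. by move=> hx hy; rewrite -[y]opprK; apply: (pm_sub PM) => //; apply: ON. Qed.
Lemma OM x y : x \in O -> y \in O -> x * y \in O.
Proof. exact: (pm_mul PM). Qed.
Lemma Oint (z : int) : z%:~R \in O.
Proof.
have := pm_rat PM z%:~R. rewrite ratr_int => ->.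
rewrite denq_int /= dvdn1. by case: eqP pr => // ->.
Qed.
Lemma Osum (I : finType) (F : I -> K) : (forall i, F i \in O) -> \sum_i F i \in O.
Proof.
move=> h; apply: (big_ind (fun x => x \in O)) => //; [exact: O0| exact: OD].
Qed.

Definition mxO m k (M : 'M[K]_(m, k)) := forall i j, M i j \in O.

Lemma mxO_mul m k l (A : 'M[K]_(m, k)) (B : 'M[K]_(k, l)) :
  mxO A -> mxO B -> mxO (A *m B).
Proof. by move=> hA hB i j; rewrite mxE; apply: Osum => t; apply: OM. Qed.
Lemma mxO_tr m k (A : 'M[K]_(m, k)) : mxO A -> mxO A^T.
Proof. by move=> hA i j; rewrite mxE. Qed.
Lemma mxO_int m k (A : 'M[int]_(m, k)) : mxO (intmx A).
Proof. by move=> i j; rewrite mxE; apply: Oint. Qed.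
End OLemmas.

Section PLemmas.
Variable p : nat.
Definition Pz (r : rat) := exists k : nat, exists z : int, r * p%:R ^+ k = z%:~R.

Lemma Pz_int (z : int) : Pz z%:~R.
Proof. by exists 0%N, z; rewrite expr0 mulr1. Qed.
Lemma Pz_add r s : Pz r -> Pz s -> Pz (r + s).
Proof.
move=> [k [a ha]] [l [b hb]]; exists (k + l)%N, (a * p%:R ^+ l + b * p%:R ^+ k).
rewrite !(rmorphD, rmorphM, rmorphXn, rmorph_nat) /= -ha -hb exprD; ring.
Qed.
Lemma Pz_mul r s : Pz r -> Pz s -> Pz (r * s).
Proof.
move=> [k [a ha]] [l [b hb]]; exists (k + l)%N, (a * b).
by rewrite rmorphM /= -ha -hb exprD; ring.
Qed.
Lemma Pz_sum (I : finType) (F : I -> rat) : (forall i, Pz (F i)) -> Pz (\sum_i F i).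
Proof.
move=> h; apply: (big_ind Pz) => //; [exact: (Pz_int 0)| exact: Pz_add].
Qed.
Lemma Pz_Zinvp r : in_Zinvp p r -> Pz r.
Proof.
move=> [k /dvdzP [q hq]]; exists k, (numq r * q).
rewrite -natrX -[((p ^ k)%N)%:R]/(((p ^ k)%N%:Z)%:~R) hq !rmorphM /= numqE; ring.
Qed.

Definition mxP m k (M : 'M[rat]_(m, k)) := forall i j, Pz (M i j).
Lemma mxP_mul m k l (A : 'M[rat]_(m, k)) (B : 'M[rat]_(k, l)) :
  mxP A -> mxP B -> mxP (A *m B).
Proof. by move=> hA hB i j; rewrite mxE; apply: Pz_sum => t; apply: Pz_mul. Qed.
Lemma mxP_tr m k (A : 'M[rat]_(m, k)) : mxP A -> mxP A^T.
Proof. by move=> hA i j; rewrite mxE. Qed.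
Lemma mxP_int m k (A : 'M[int]_(m, k)) : mxP (intmx A).
Proof. by move=> i j; rewrite mxE; apply: Pz_int. Qed.
End PLemmas.

Lemma integral_rat (p : nat) (K : fieldType) (O : {pred K}) r :
  padic_model p K O -> prime p -> Pz p r -> ratr r \in O -> r = (numq r)%:~R.
Proof.
move=> PM pr [k [z hz]]; rewrite (pm_rat PM) => ndv.
have cop : coprime `|denq r| (p ^ k).
  by apply: coprimeXr; rewrite coprime_sym prime_coprime.
have e : (numq r * (p ^ k)%N%:Z = z * denq r).
  apply: (@intr_inj rat); rewrite !rmorphM /= numqE -hz.
  by rewrite -natrX pmulrn; ring.
have : (`|denq r| %| `|numq r| * p ^ k)%N.
  by rewrite -[(p ^ k)%N]/(`|(p ^ k)%N%:Z|%N) -abszM e abszM dvdn_mull.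
have cn : coprime `|denq r| `|numq r| by rewrite coprime_sym coprime_num_den.
rewrite (Gauss_dvdr _ cn).
move/gcdn_idPl; rewrite (eqP cop) => d1.
have : denq r = 1 by case: (denq r) (denq_gt0 r) d1 => // -[|[|]].
by move=> hd; rewrite numqE hd mulr1.
Qed.

Lemma int_of_mx p (K : fieldType) (O : {pred K}) m k (X : 'M[rat]_(m,k)) :
  padic_model p K O -> prime p -> mxP p X -> mxO O (ratmx X : 'M[K]_(m,k)) ->
  X = intmx (map_mx numq X).
Proof.
move=> PM pr hP hO; apply/matrixP=> i j; rewrite !mxE.
apply: (integral_rat PM pr (hP i j)); have := hO i j; rewrite mxE; exact.
Qed.

Lemma intmx_inj m k (A B : 'M[int]_(m, k)) :
  intmx A = intmx B :> 'M[rat]_(m, k) -> A = B.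
Proof.
move/matrixP=> h; apply/matrixP=> i j; have := h i j; rewrite !mxE; exact: intr_inj.
Qed.

Section IntmxLemmas.
Variable R : pzRingType.
Lemma intmx_tr m k (A : 'M[int]_(m, k)) : intmx A^T = (intmx A)^T :> 'M[R]_(k, m).
Proof. by rewrite /intmx map_trmx. Qed.
Lemma intmx_col m k (A : 'M[int]_(m, k)) j : intmx (col j A) = col j (intmx A) :> 'M[R]_(m, 1).
Proof. by rewrite /intmx map_col. Qed.
Lemma intmx_lsub m k l (A : 'M[int]_(m, k + l)) : intmx (lsubmx A) = lsubmx (intmx A) :> 'M[R]_(m, k).
Proof. by rewrite /intmx map_lsubmx. Qed.
Lemma intmx_row m k l (A : 'M[int]_(m, k)) (B : 'M[int]_(m, l)) :
  intmx (row_mx A B) = row_mx (intmx A) (intmx B) :> 'M[R]_(m, k + l).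
Proof. by rewrite /intmx map_row_mx. Qed.
Lemma intmxZ m k (z : int) (A : 'M[int]_(m, k)) :
  intmx (z *: A) = z%:~R *: intmx A :> 'M[R]_(m, k).
Proof. by apply/matrixP => i j; rewrite !mxE intrM. Qed.
Lemma intmx0 m k : intmx (0 : 'M[int]_(m, k)) = 0 :> 'M[R]_(m, k).
Proof. by apply/matrixP => i j; rewrite !mxE. Qed.
End IntmxLemmas.

Lemma covolE d k (b : 'M[rat]_(d, k)) : covol b = sqrtC (ratr (\det (b^T *m b))).
Proof. by rewrite /covol map_trmx -map_mxM det_map_mx. Qed.

Theorem corollary3p3 (n p : nat) (K : fieldType) (O : {pred K})
    (v : 'cV[int]_(n + 1)) (gv : 'M[int]_(n + 1))
    (h c1 c2 : 'M[K]_(n + 1)) (g1 g2 : 'M[rat]_(n + 1)) :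
  padic_model p K O -> prime p ->
  primitive v -> is_gv v gv ->
  in_Hv v h ->
  is_SO (fun x => x \in O) c1 -> is_SO (in_Zinvp p) g1 ->
  h = c1 *m ratmx g1 ->
  is_ASL (fun x => x \in O) c2 -> is_ASL (in_Zinvp p) g2 ->
  invmx (intmx gv) *m h *m intmx gv = c2 *m invmx (ratmx g2) ->
  exists w : 'cV[int]_(n + 1),
    [/\ g1 *m intmx v = intmx w, primitive w,
        (forall x, Zspan (lsubmx (g1 *m intmx gv *m g2)) x <-> Lambda w x)
      & covol (lsubmx (g1 *m intmx gv *m g2)) = covol (intmx (lsubmx gv))].
Proof.
move=> PM pr primv [dgv spgv _] [_ hv] [c1O c1orth _] [g1Z g1orth g1det] hdef
  [c2O _ _ _] [g2Z g2dl g2dr g2det] heq.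
have K0 := pm_char0 PM.
have Gu : (intmx gv : 'M[K]_(n+1)) \in unitmx.
  by rewrite unitmxE intmx_det dgv unitr1.
have c1T : c1 *m c1^T = 1%:M by apply: mulmx1C.
have g2det1 : \det g2 = 1.
  by rewrite -(submxK g2) g2dl g2dr det_ublock det1 mulr1.
have r1 : ratr (1 : rat) = 1 :> K := ratr_int K 1.
have R2u : (ratmx g2 : 'M[K]_(n+1)) \in unitmx.
  by rewrite unitmxE ratmx_det // g2det1 r1 unitr1.
have key : ratmx g1 *m intmx gv *m ratmx g2 = c1^T *m intmx gv *m c2 :> 'M[K]_(n+1).
  have e1 : intmx gv *m (invmx (intmx gv) *m h *m intmx gv) =
            intmx gv *m (c2 *m invmx (ratmx g2)) :> 'M[K]_(n+1) by rewrite heq.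
  rewrite !mulmxA mulmxV // mul1mx in e1.
  have e2 : h *m intmx gv *m ratmx g2 = intmx gv *m c2 :> 'M[K]_(n+1).
    by rewrite e1 mulmxKV.
  by rewrite -[RHS]mulmxA -e2 hdef !mulmxA c1orth mul1mx.
set M := g1 *m intmx gv *m g2.
have g1P : mxP p g1 by move=> i j; apply: Pz_Zinvp.
have g2P : mxP p g2 by move=> i j; apply: Pz_Zinvp.
have MP : mxP p M by apply: mxP_mul => //; apply: mxP_mul => //; apply: mxP_int.
have MO : mxO O (ratmx M : 'M[K]_(n+1)).
  rewrite /M !ratmxM // ratmx_int // key.
  apply: (mxO_mul PM) => //; apply: (mxO_mul PM); first exact: mxO_tr.
  exact: (mxO_int PM pr).
have [Mz hM] : exists Mz, M = intmx Mz := ex_intro _ _ (int_of_mx PM pr MP MO).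
have hvK : ratmx (g1 *m intmx v) = c1^T *m intmx v :> 'M[K]_(n+1,1).
  by rewrite ratmxM // ratmx_int // -{2}hv hdef !mulmxA c1orth mul1mx.
have wP : mxP p (g1 *m intmx v) by apply: mxP_mul => //; apply: mxP_int.
have wO : mxO O (ratmx (g1 *m intmx v) : 'M[K]_(n+1,1)).
  by rewrite hvK; apply: (mxO_mul PM); [exact: mxO_tr | exact: (mxO_int PM pr)].
have [w hw] : exists w, g1 *m intmx v = intmx w := ex_intro _ _ (int_of_mx PM pr wP wO).
have hvL : v^T *m lsubmx gv = 0.
  apply/matrixP => i j; rewrite [i]ord1 [RHS]mxE.
  have [z [hz hz0]] : Lambda v (col j (intmx (lsubmx gv))).
    apply/spgv; exists (delta_mx j 0); rewrite colE; congr (_ *m _).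
    by apply/matrixP => a b; rewrite !mxE; case: (_ && _).
  have ez : col j (lsubmx gv) = z by apply: intmx_inj; rewrite -hz intmx_col.
  move/matrixP/(_ 0 0): hz0; rewrite -ez !mxE => e; rewrite -[RHS]e.
  by apply: eq_bigr => k _; rewrite !mxE.
set a := v^T *m rsubmx gv.
have hvG : v^T *m gv = row_mx 0 a by rewrite -{1}(hsubmxK gv) mul_mx_row hvL.
have a00 : a 0 0 != 0.
  apply/eqP => a0.
  have a0' : a = 0 by apply/matrixP => i j; rewrite [i]ord1 [j]ord1 a0 mxE.
  have v0 : v^T = 0.
    have : v^T *m gv *m \adj gv = 0 by rewrite hvG a0' row_mx0 mul0mx.
    by rewrite -mulmxA mul_mx_adj dgv mulmx1.
  have : (\big[gcdn/0]_(i < n+1) `|v i ord0|)%N = 0%N.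
    apply: big1 => i _; move/matrixP/(_ ord0 i): v0; rewrite !mxE => ->; done.
  by rewrite primv.
have hwM : w^T *m Mz = row_mx 0 a.
  apply: intmx_inj; rewrite intmxM intmx_tr -hw -hM /M.
  rewrite trmx_mul -!mulmxA (mulmxA g1^T) g1orth mul1mx mulmxA -intmx_tr -intmxM hvG.
  rewrite -(submxK g2) g2dl g2dr !intmx_row mul_row_block !intmx0 !mul0mx !mulmx0 mulmx1.
  by rewrite !add0r.
have detMz : \det Mz = 1.
  apply: (@intr_inj rat); rewrite -intmx_det -hM /M !det_mulmx g1det intmx_det dgv g2det1.
  by rewrite !mul1r.
exists w; split => //.
- set gg := (\big[gcdn/0]_(i < n+1) `|w i ord0|)%N.
  have ggw : forall i, (gg %| `|w i ord0|)%N by move=> i; apply: (biggcdn_inf i).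
  suff ggv : forall i, (gg %| `|v i ord0|)%N.
    have : (gg %| \big[gcdn/0]_(i < n+1) `|v i ord0|)%N.
      apply: (big_ind (fun x => gg %| x)%N); first exact: dvdn0.
        by move=> x y hx hy; rewrite dvdn_gcd hx hy.
      by move=> i _; apply: ggv.
    by move: primv; rewrite /primitive => ->; rewrite dvdn1 => /eqP.
  have [/eqP gg0 | ggn0] := boolP (gg == 0%N).
  + have w0 : w = 0.
      apply/matrixP => i j; rewrite [j]ord1 mxE.
      by have := ggw i; rewrite gg0 dvd0n absz_eq0 => /eqP.
    have v0 : v = 0.
      apply: intmx_inj; rewrite intmx0 -[intmx v]mul1mx -g1orth -mulmxA hw w0.
      by rewrite intmx0 mulmx0.
    by move=> i; rewrite v0 mxE dvdn0.
  + set w' := map_mx (fun x => (x %/ gg%:Z)%Z) w.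
    have hww : w = gg%:Z *: w'.
      apply/matrixP => i j; rewrite [j]ord1 !mxE mulrC divzK //.
      by rewrite dvdzE; exact: ggw.
    set u := g1^T *m intmx w'.
    have hVu : intmx v = (gg%:Z)%:~R *: u :> 'M[rat]_(n+1,1).
      by rewrite /u scalemxAr -intmxZ -hww -hw mulmxA g1orth mul1mx.
    have uP : mxP p u by apply: mxP_mul; [exact: mxP_tr | exact: mxP_int].
    have hVK : intmx v = c1 *m (intmx w : 'M[K]_(n+1,1)).
      by rewrite -[intmx w](@ratmx_int K) -hw ratmxM // ratmx_int // mulmxA -hdef hv.
    have gK : (gg%:Z)%:~R != 0 :> K.
      by move/pcharf0P: K0 => H; change (gg%:R != 0 :> K); rewrite H.
    have uO : mxO O (ratmx u : 'M[K]_(n+1,1)).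
      have e : (gg%:Z)%:~R *: ratmx u = (gg%:Z)%:~R *: (c1 *m intmx w') :> 'M[K]_(n+1,1).
        rewrite scalemxAr -intmxZ -hww -hVK -[intmx v](@ratmx_int K) hVu.
        by rewrite ratmxZ // ratr_int.
      rewrite (scalerI gK e); apply: (mxO_mul PM) => //; exact: (mxO_int PM pr).
    have [u' hu'] : exists u', u = intmx u' := ex_intro _ _ (int_of_mx PM pr uP uO).
    have hv' : v = gg%:Z *: u' by apply: intmx_inj; rewrite intmxZ -hu' hVu.
    by move=> i; rewrite hv' mxE abszM dvdn_mulr.
- move=> x; split.
  + move=> [c ->]; exists (lsubmx Mz *m c); split.
      by rewrite hM intmxM intmx_lsub.
    by rewrite mulmxA mulmx_lsub hwM row_mxKl mul0mx.
  + move=> [z [-> hz]].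
    set y := \adj Mz *m z.
    have zy : z = Mz *m y by rewrite /y mulmxA mul_mx_adj detMz mul1mx.
    have hy := vsubmxK y.
    have e3 : w^T *m z = a *m dsubmx y.
      by rewrite zy mulmxA hwM -{1}hy mul_row_col mul0mx add0r.
    rewrite hz in e3.
    have yd0 : dsubmx y = 0.
      move: (dsubmx y) (esym e3) => d e4.
      apply/matrixP => i j; rewrite [i]ord1 [j]ord1 [RHS]mxE.
      move/matrixP/(_ ord0 ord0): e4; rewrite !mxE big_ord1 => /eqP.
      by rewrite mulf_eq0 (negbTE a00) /= => /eqP.
    exists (usubmx y).
    rewrite hM -intmx_lsub -intmxM; congr intmx.
    by rewrite zy -{1}hy -[Mz in Mz *m _]hsubmxK mul_row_col yd0 mulmx0 addr0.
- rewrite !covolE.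
  have hB : lsubmx M = g1 *m (intmx (lsubmx gv) *m ulsubmx g2).
    rewrite /M -{1}(submxK g2) g2dl g2dr -[intmx gv]hsubmxK mul_mx_row mul_row_block.
    by rewrite row_mxKl mulmx0 addr0 intmx_lsub mulmxA.
  rewrite hB trmx_mul -!mulmxA (mulmxA g1^T) g1orth mul1mx.
  set L := intmx (lsubmx gv) : 'M[rat]_(n+1, n).
  set A := ulsubmx g2.
  have -> : (L *m A)^T *m (L *m A) = A^T *m (L^T *m L) *m A.
    by rewrite trmx_mul !mulmxA.
  by rewrite !det_mulmx det_tr g2det mul1r mulr1.
Qed.
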